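(* Define real algebras $A_i$, $i\ge 0$, by $A_0=\mathbb{R}$ with $\bar a=a$, and $A_{i+1}=A_i\oplus A_i$ with multiplication $(a,b)(c,d)=(ac-d\bar b,\ \bar a d+cb)$ and involution $\overline{(a,b)}=(\bar a,-b)$. Then every $A_i$, $i\ge0$, is von-Neumann finite and reversible.
   Context: An algebra $A$ (unital, not necessarily associative) is von-Neumann finite if $ab=1$ implies $ba=1$ for all $a,b\in A$, and reversible if $ab=0$ implies $ba=0$ for all $a,b\in A$. *)

(* Defs.v *)
From mathcomp Require Import all_boot all_order all_algebra.
From mathcomp Require Import reals.
Set Implicit Arguments. Unset Strict Implicit. Unset Printing Implicit Defensive.
Import GRing.Theory Num.Theory.
Local Open Scope ring_scope.

Section CD.
Variable R : realType.

Fixpoint CD (n : nat) : Type :=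
  match n with 0 => (R : Type) | m.+1 => (CD m * CD m)%type end.

Fixpoint cd_zero (n : nat) : CD n :=
  match n return CD n with 0 => (0 : R) | m.+1 => (cd_zero m, cd_zero m) end.

Fixpoint cd_one (n : nat) : CD n :=
  match n return CD n with 0 => (1 : R) | m.+1 => (cd_one m, cd_zero m) end.

Fixpoint cd_add (n : nat) : CD n -> CD n -> CD n :=
  match n return CD n -> CD n -> CD n with
  | 0 => fun x y : R => x + y
  | m.+1 => fun x y => (cd_add x.1 y.1, cd_add x.2 y.2)
  end.

Fixpoint cd_opp (n : nat) : CD n -> CD n :=
  match n return CD n -> CD n with
  | 0 => fun x : R => - x
  | m.+1 => fun x => (cd_opp x.1, cd_opp x.2)
  end.

Fixpoint cd_conj (n : nat) : CD n -> CD n :=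
  match n return CD n -> CD n with
  | 0 => fun x : R => x
  | m.+1 => fun x => (cd_conj x.1, cd_opp x.2)
  end.

Fixpoint cd_mul (n : nat) : CD n -> CD n -> CD n :=
  match n return CD n -> CD n -> CD n with
  | 0 => fun x y : R => x * y
  | m.+1 => fun x y =>
      let: (a, b) := x in let: (c, d) := y in
      (cd_add (cd_mul a c) (cd_opp (cd_mul d (cd_conj b))),
       cd_add (cd_mul (cd_conj a) d) (cd_mul c b))
  end.

End CD.

Definition cd_vN_finite (R : realType) (n : nat) : Prop :=
  forall a b : CD R n, cd_mul a b = cd_one R n -> cd_mul b a = cd_one R n.

Definition cd_reversible (R : realType) (n : nat) : Prop :=
  forall a b : CD R n, cd_mul a b = cd_zero R n -> cd_mul b a = cd_zero R n.

(* Main.v *)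
Require Import Defs.
From mathcomp Require Import all_boot all_order all_algebra.
From mathcomp Require Import reals.
From mathcomp Require Import ring lra.

Set Implicit Arguments. Unset Strict Implicit. Unset Printing Implicit Defensive.
Import GRing.Theory Num.Theory.

Section Aux.
Local Open Scope ring_scope.
Variable R : realType.

Fixpoint cdB (n : nat) : CD R n -> CD R n -> R :=
  match n return CD R n -> CD R n -> R with
  | 0 => fun x y : R => x * y
  | m.+1 => fun x y => cdB x.1 y.1 + cdB x.2 y.2
  end.

Fixpoint cdRe (n : nat) : CD R n -> R :=
  match n return CD R n -> R with
  | 0 => fun x : R => x
  | m.+1 => fun x => cdRe x.1
  end.

Fixpoint cdreal (n : nat) (r : R) : CD R n :=
  match n return CD R n with
  | 0 => r
  | m.+1 => (cdreal m r, cd_zero R m)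
  end.

Fixpoint cdscale (n : nat) (r : R) : CD R n -> CD R n :=
  match n return CD R n -> CD R n with
  | 0 => fun x : R => r * x
  | m.+1 => fun x => (cdscale r x.1, cdscale r x.2)
  end.

Ltac fixR := repeat match goal with H : CD R 0 |- _ => revert H end; rewrite /CD; intros.

Lemma B_sym n (x y : CD R n) : cdB x y = cdB y x.
Proof. elim: n x y => [|n IH] /= x y; first by fixR; ring. by rewrite IH (IH x.2). Qed.

Lemma B_addl n (x y z : CD R n) : cdB (cd_add x y) z = cdB x z + cdB y z.
Proof. elim: n x y z => [|n IH] /= x y z; first by fixR; ring. rewrite !IH; ring. Qed.

Lemma B_oppl n (x z : CD R n) : cdB (cd_opp x) z = - cdB x z.
Proof. elim: n x z => [|n IH] /= x z; first by fixR; ring. rewrite !IH; ring. Qed.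

Lemma B_scalel n r (x z : CD R n) : cdB (cdscale r x) z = r * cdB x z.
Proof. elim: n x z => [|n IH] /= x z; first by fixR; ring. rewrite !IH; ring. Qed.

Lemma B_zerol n (z : CD R n) : cdB (cd_zero R n) z = 0.
Proof. elim: n z => [|n IH] /= z; first by fixR; ring. rewrite !IH; ring. Qed.

Lemma B_reall n r (z : CD R n) : cdB (cdreal n r) z = r * cdRe z.
Proof. elim: n z => [|n IH] /= z; first by fixR; ring. rewrite IH B_zerol; ring. Qed.

Lemma B_addr n (x y z : CD R n) : cdB z (cd_add x y) = cdB z x + cdB z y.
Proof. by rewrite B_sym B_addl !(B_sym _ z). Qed.
Lemma B_oppr n (x z : CD R n) : cdB z (cd_opp x) = - cdB z x.
Proof. by rewrite B_sym B_oppl (B_sym _ z). Qed.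
Lemma B_scaler n r (x z : CD R n) : cdB z (cdscale r x) = r * cdB z x.
Proof. by rewrite B_sym B_scalel (B_sym _ z). Qed.
Lemma B_realr n r (z : CD R n) : cdB z (cdreal n r) = r * cdRe z.
Proof. by rewrite B_sym B_reall. Qed.
Lemma B_zeror n (z : CD R n) : cdB z (cd_zero R n) = 0.
Proof. by rewrite B_sym B_zerol. Qed.

Lemma Re_real n r : cdRe (cdreal n r) = r.
Proof. by elim: n => [|n IH] //=. Qed.

Lemma conj_opp n (x : CD R n) : cd_conj (cd_opp x) = cd_opp (cd_conj x).
Proof. elim: n x => [|n IH] /= x //. by rewrite IH. Qed.

Lemma conjK n (x : CD R n) : cd_conj (cd_conj x) = x.
Proof.
elim: n x => [|n IH] /= x //. rewrite IH.
have oK : forall m (y : CD R m), cd_opp (cd_opp y) = y.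
  by elim=> [|m IHm] /= y; [rewrite opprK | rewrite !IHm; case: y].
by rewrite oK; case: x.
Qed.

Lemma oppK n (y : CD R n) : cd_opp (cd_opp y) = y.
Proof. by elim: n y => [|m IHm] /= y; [rewrite opprK | rewrite !IHm; case: y]. Qed.

Lemma B_conj n (x y : CD R n) : cdB (cd_conj x) (cd_conj y) = cdB x y.
Proof. elim: n x y => [|n IH] /= x y //. by rewrite IH B_oppl B_oppr opprK. Qed.

Lemma opp_add n (x y : CD R n) : cd_opp (cd_add x y) = cd_add (cd_opp x) (cd_opp y).
Proof. elim: n x y => [|m IHm] /= u v; first by rewrite opprD. by rewrite !IHm. Qed.

Lemma conj_add n (x y : CD R n) : cd_conj (cd_add x y) = cd_add (cd_conj x) (cd_conj y).
Proof. elim: n x y => [|n IH] /= x y //. by rewrite IH opp_add. Qed.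

Lemma opp_zero n : cd_opp (cd_zero R n) = cd_zero R n.
Proof. elim: n => [|n IH] /=; [by rewrite oppr0 | by rewrite IH]. Qed.

Lemma conj_zero n : cd_conj (cd_zero R n) = cd_zero R n.
Proof. elim: n => [|n IH] //=; by rewrite IH opp_zero. Qed.

Lemma conj_real n r : cd_conj (cdreal n r) = cdreal n r.
Proof. elim: n => [|n IH] //=; by rewrite IH opp_zero. Qed.

Lemma add0 n (x : CD R n) : cd_add (cd_zero R n) x = x.
Proof. elim: n x => [|n IH] /= x; [by rewrite add0r | by rewrite !IH; case: x]. Qed.

Lemma addC n (x y : CD R n) : cd_add x y = cd_add y x.
Proof. elim: n x y => [|n IH] /= x y; [by rewrite addrC | by rewrite IH (IH _ x.2)]. Qed.

Lemma addr0' n (x : CD R n) : cd_add x (cd_zero R n) = x.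
Proof. by rewrite addC add0. Qed.

Lemma add_AC n (a b c d : CD R n) :
  cd_add (cd_add a b) (cd_add c d) = cd_add (cd_add a c) (cd_add b d).
Proof. elim: n a b c d => [|n IH] /= a b c d; [fixR; ring | by rewrite (IH a.1) (IH a.2)]. Qed.

Lemma addN n (x : CD R n) : cd_add x (cd_opp x) = cd_zero R n.
Proof. elim: n x => [|n IH] /= x; [by rewrite subrr | by rewrite !IH]. Qed.

Lemma mul_zero n (x : CD R n) :
  cd_mul (cd_zero R n) x = cd_zero R n /\ cd_mul x (cd_zero R n) = cd_zero R n.
Proof.
elim: n x => [|n IH] /= x; first by rewrite mul0r mulr0.
case: x => a b /=.
by rewrite conj_zero !(proj1 (IH _)) !(proj2 (IH _)) opp_zero !add0.
Qed.

Lemma mul_opp n (x y : CD R n) :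
  cd_mul (cd_opp x) y = cd_opp (cd_mul x y) /\ cd_mul x (cd_opp y) = cd_opp (cd_mul x y).
Proof.
elim: n x y => [|n IH] /= x y; first by rewrite mulNr mulrN.
case: x => a b; case: y => c d /=.
by rewrite !conj_opp !(proj1 (IH _ _)) !(proj2 (IH _ _)) !opp_add.
Qed.

Lemma mul_add n (x y z : CD R n) :
  cd_mul (cd_add x y) z = cd_add (cd_mul x z) (cd_mul y z) /\
  cd_mul z (cd_add x y) = cd_add (cd_mul z x) (cd_mul z y).
Proof.
elim: n x y z => [|n IH] /= x y z; first by rewrite mulrDl mulrDr.
case: x => a b; case: y => c d; case: z => e f /=.
rewrite !conj_add !(proj1 (IH _ _ _)) !(proj2 (IH _ _ _)) !opp_add.
by split; congr (_, _); rewrite add_AC.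
Qed.

Lemma mul_reall n r (x : CD R n) : cd_mul (cdreal n r) x = cdscale r x.
Proof.
elim: n x => [|n IH] /= x //. case: x => c d /=.
by rewrite conj_zero conj_real !IH !(proj2 (mul_zero _)) opp_zero !addr0'.
Qed.

Lemma mul_realr n r (x : CD R n) : cd_mul x (cdreal n r) = cdscale r x.
Proof.
elim: n x => [|n IH] /= x; first by rewrite mulrC. case: x => c d /=.
by rewrite mul_reall IH !(proj1 (mul_zero _)) !(proj2 (mul_zero _)) opp_zero addr0' add0.
Qed.

Lemma conj_decomp n (x : CD R n) :
  cd_conj x = cd_add (cdreal n (cdRe x *+ 2)) (cd_opp x).
Proof. elim: n x => [|n IH] /= x; first by fixR; rewrite mulr2n; ring. by rewrite IH add0. Qed.

Lemma conj_mul n (x y : CD R n) :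
  cd_conj (cd_mul x y) = cd_mul (cd_conj y) (cd_conj x).
Proof.
elim: n x y => [|n IH] /= x y; first by rewrite mulrC.
case: x => a b; case: y => c d /=.
rewrite conj_add !conj_opp !IH !conjK opp_add.
rewrite !(proj1 (mul_opp _ _)) !(proj2 (mul_opp _ _)) !oppK.
by rewrite (addC (cd_opp _)).
Qed.

Lemma adjoint n (x y z : CD R n) :
  cdB (cd_mul x y) z = cdB x (cd_mul z (cd_conj y)) /\
  cdB (cd_mul x y) z = cdB y (cd_mul (cd_conj x) z).
Proof.
elim: n x y z => [|n IH] /= x y z; first by fixR; split; ring.
case: x => a b; case: y => c d; case: z => e f /=.
rewrite !conj_opp !conjK.
rewrite !(proj1 (mul_opp _ _)) !(proj2 (mul_opp _ _)) !oppK.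
rewrite !B_addl !B_addr !B_oppl !B_oppr.
split.
  rewrite (proj1 (IH a c e)) (proj1 (IH d _ e)) (proj2 (IH _ d f)) (proj2 (IH c b f)) !conjK.
  rewrite -(proj1 (IH a f d)) -(proj2 (IH e b d)).
  rewrite (B_sym d (cd_mul a f)) (B_sym d (cd_mul e b)); ring.
rewrite (proj2 (IH a c e)) (proj1 (IH d _ e)) (proj2 (IH _ d f)) (proj1 (IH c b f)) !conjK.
ring.
Qed.

Lemma real_add n r s : cd_add (cdreal n r) (cdreal n s) = cdreal n (r + s).
Proof. elim: n => [|n IH] //=. by rewrite IH add0. Qed.

Lemma normC n (y : CD R n) :
  cd_mul y (cd_conj y) = cdreal n (cdB y y) /\ cd_mul (cd_conj y) y = cdreal n (cdB y y).
Proof.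
elim: n y => [|n IH] /= y; first by [].
case: y => c d /=.
rewrite !conj_opp !conjK !(proj1 (mul_opp _ _)) !(proj2 (mul_opp _ _)) !oppK.
rewrite (proj1 (IH c)) (proj2 (IH c)) !(proj1 (IH d)) !real_add.
by split; [rewrite addC addN | rewrite addN].
Qed.

Lemma scale1 n (x : CD R n) : cdscale 1 x = x.
Proof. elim: n x => [|n IH] /= x; first by rewrite mul1r. by rewrite !IH; case: x. Qed.

Lemma one_real n : cd_one R n = cdreal n 1.
Proof. by elim: n => [|n IH] //=; rewrite IH. Qed.

Lemma zero_real n : cd_zero R n = cdreal n 0.
Proof. by elim: n => [|n IH] //=; rewrite IH. Qed.

Lemma B_ge0 n (x : CD R n) : 0 <= cdB x x.
Proof. elim: n x => [|n IH] /= x; first by fixR; rewrite -expr2 sqr_ge0. by rewrite addr_ge0. Qed.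

Lemma B_eq0 n (x : CD R n) : cdB x x = 0 -> x = cd_zero R n.
Proof.
elim: n x => [|n IH] /= x; first by move=> /eqP; rewrite mulf_eq0 orbb => /eqP ->.
move=> h. have h1 := B_ge0 x.1. have h2 := B_ge0 x.2.
have e1 : cdB x.1 x.1 = 0 by lra.
have e2 : cdB x.2 x.2 = 0 by lra.
by case: x h h1 h2 e1 e2 => u v /= _ _ _ e1 e2; rewrite (IH _ e1) (IH _ e2).
Qed.

Lemma Re_le n (x : CD R n) : cdRe x ^+ 2 <= cdB x x.
Proof.
elim: n x => [|n IH] /= x; first by fixR; rewrite expr2.
have := B_ge0 x.2. have := IH x.1. lra.
Qed.

Lemma Re_eq n (x : CD R n) : cdB x x = cdRe x ^+ 2 -> x = cdreal n (cdRe x).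
Proof.
elim: n x => [|n IH] /= x; first by [].
move=> h. have h1 := Re_le x.1. have h2 := B_ge0 x.2.
have e1 : cdB x.1 x.1 = cdRe x.1 ^+ 2 by lra.
have e2 : cdB x.2 x.2 = 0 by lra.
by case: x h h1 h2 e1 e2 => u v /= _ _ _ e1 e2; rewrite {1}(IH _ e1) (B_eq0 e2).
Qed.

Lemma Re_mul n (a b : CD R n) : cdRe (cd_mul a b) = cdRe a * cdRe b *+ 2 - cdB a b.
Proof.
have := B_realr 1 (cd_mul a b). rewrite mul1r => <-.
rewrite (proj1 (adjoint _ _ _)) mul_reall scale1 conj_decomp B_addr B_oppr B_realr.
rewrite mulrC -mulrnAl; ring.
Qed.

Lemma N_swap n (a b : CD R n) :
  cdB (cd_mul b a) (cd_mul b a) = cdB (cd_mul a b) (cd_mul a b).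
Proof.
have hq : cd_mul b a = cd_conj (cd_mul (cd_conj a) (cd_conj b)) by rewrite conj_mul !conjK.
have h1 : cdB (cd_mul a b) a = cdB a a * cdRe b.
  by rewrite (proj2 (adjoint _ _ _)) (proj2 (normC a)) B_realr.
have h2 : cdB (cd_mul a b) b = cdB b b * cdRe a.
  by rewrite (proj1 (adjoint _ _ _)) (proj1 (normC b)) B_realr.
have h1' : cdB a (cd_mul a b) = cdB a a * cdRe b by rewrite B_sym.
have h2' : cdB b (cd_mul a b) = cdB b b * cdRe a by rewrite B_sym.
rewrite hq B_conj (conj_decomp a) (conj_decomp b).
rewrite !(proj1 (mul_add _ _ _)) !(proj2 (mul_add _ _ _)).
rewrite !mul_reall !mul_realr !(proj1 (mul_opp _ _)) !(proj2 (mul_opp _ _)).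
rewrite !B_addl !B_addr !B_scalel !B_scaler !B_oppl !B_oppr !B_reall !B_realr.
rewrite !Re_real h1 h1' h2 h2' Re_mul (B_sym b a).
rewrite !mulr2n; ring.
Qed.

Lemma Re_swap n (a b : CD R n) : cdRe (cd_mul b a) = cdRe (cd_mul a b).
Proof. by rewrite !Re_mul (B_sym b a) mulrC. Qed.

End Aux.

Theorem corollary4p5 (R : realType) (n : nat) :
  cd_vN_finite R n /\ cd_reversible R n.
Proof.
split=> a b h.
- have hN := N_swap a b. have hR := Re_swap a b.
  rewrite h one_real B_reall Re_real mulr1 in hN.
  rewrite h one_real Re_real in hR.
  rewrite one_real (Re_eq (x := cd_mul b a)) hR //.
  by rewrite hN expr1n.
- apply: B_eq0. by rewrite N_swap h B_zerol.
Qed.
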